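(* Frame equivalence is not compositional in general: there exists a psi-calculus (satisfying all the requisites below) with frames $F,G,H$ such that $F\simeq G$ but not $F\otimes H\simeq G\otimes H$.
   Context: Names: a countably infinite set $\mathcal N$ of atomic names. A nominal set is a set equipped with name swapping operations $(a\;b)\cdot X$; the support $\mathrm n(X)$ is the set of names affected by swappings, assumed finite; $a\#X$ means $a\notin\mathrm n(X)$. Psi-calculus: given by three nominal datatypes $\mathbf T$ (terms), $\mathbf C$ (conditions, $\varphi$), $\mathbf A$ (assertions, $\Psi$), equivariant operators $\leftrightarrow:\mathbf T\times\mathbf T\to\mathbf C$, $\otimes:\mathbf A\times\mathbf A\to\mathbf A$, $\mathbf 1\in\mathbf A$, $\vdash\subseteq\mathbf A\times\mathbf C$, and equivariant substitution functions $X[\tilde a:=\tilde T]$ on $\mathbf T,\mathbf C,\mathbf A$ satisfying: (S1) if $\tilde a\subseteq\mathrm n(X)$ and $b\in\mathrm n(\tilde T)$ then $b\in\mathrm n(X[\tilde a:=\tilde T])$; (S2) if $\tilde b\# X,\tilde a$ then $X[\tilde a:=\tilde T]=((\tilde b\;\tilde a)\cdot X)[\tilde b:=\tilde T]$. $\Psi\simeq\Psi'$ iff for all $\varphi$: $\Psi\vdash\varphi\iff\Psi'\vdash\varphi$. Required: $\Psi\vdash M\leftrightarrow N\Rightarrow\Psi\vdash N\leftrightarrow M$; $\Psi\vdash M\leftrightarrow N\wedge\Psi\vdash N\leftrightarrow L\Rightarrow\Psi\vdash M\leftrightarrow L$; $\Psi\simeq\Psi'\Rightarrow\Psi\otimes\Psi''\simeq\Psi'\otimes\Psi''$;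 $\Psi\otimes\mathbf 1\simeq\Psi$; $(\Psi\otimes\Psi')\otimes\Psi''\simeq\Psi\otimes(\Psi'\otimes\Psi'')$; $\Psi\otimes\Psi'\simeq\Psi'\otimes\Psi$. Frames: $(\nu\tilde b)\Psi$ with the name sequence $\tilde b$ binding into $\Psi$, identified up to alpha-equivalence; $(\nu\tilde b_1)\Psi_1\otimes(\nu\tilde b_2)\Psi_2=(\nu\tilde b_1\tilde b_2)(\Psi_1\otimes\Psi_2)$ where $\tilde b_1\#\tilde b_2,\Psi_2$ and $\tilde b_2\#\tilde b_1,\Psi_1$; $F\vdash\varphi$ iff some alpha-variant $(\nu\tilde b)\Psi$ of $F$ has $\tilde b\#\varphi$ and $\Psi\vdash\varphi$; $F\simeq G$ iff for all $\varphi$, $F\vdash\varphi\iff G\vdash\varphi$; an assertion $\Psi$ is identified with the frame $(\nu\epsilon)\Psi$. *)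

(* Defs.v *)
From Stdlib Require Import List Arith Relations.
Import ListNotations.
Set Implicit Arguments.

Definition name := nat.

Definition swap_name (a b c : name) : name :=
  if Nat.eqb c a then b else if Nat.eqb c b then a else c.

(** Nominal sets, presented by swapping (Pitts' axioms) with finite support. *)
Record nominal := Nominal {
  carrier :> Type;
  swap : name -> name -> carrier -> carrier;
  swap_aa : forall a x, swap a a x = x;
  swap_inv : forall a b x, swap a b (swap a b x) = x;
  swap_conj : forall a b c d x,
    swap a b (swap c d x) = swap (swap_name a b c) (swap_name a b d) (swap a b x);
  fin_supp : forall x, exists S : list name,
    forall a b, ~ In a S -> ~ In b S -> swap a b x = x
}.
Arguments swap {n} _ _ _.

Definition supp {X : nominal} (x : X) (a : name) : Prop :=
  forall n, exists b, n <= b /\ swap a b x <> x.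

Definition fresh {X : nominal} (a : name) (x : X) : Prop := ~ supp x a.

Fixpoint swaps {X : nominal} (bs xs : list name) (x : X) : X :=
  match bs, xs with
  | b :: bs', a :: xs' => swap b a (swaps bs' xs' x)
  | _, _ => x
  end.

Definition subst_ok {X Tm : nominal} (sub : X -> list name -> list Tm -> X) : Prop :=
  (forall a b x xs Ts,
     swap a b (sub x xs Ts) = sub (swap a b x) (map (swap_name a b) xs) (map (swap a b) Ts)) /\
  (forall x xs Ts b,
     NoDup xs -> length xs = length Ts ->
     (forall a, In a xs -> supp x a) ->
     (exists M, In M Ts /\ supp M b) ->
     supp (sub x xs Ts) b) /\
  (forall x xs bs Ts,
     NoDup xs -> length xs = length Ts ->
     NoDup bs -> length bs = length xs ->
     (forall b, In b bs -> fresh b x /\ ~ In b xs) ->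
     sub x xs Ts = sub (swaps bs xs x) bs Ts).

Record psi_calculus := PsiCalculus {
  T : nominal;
  C : nominal;
  A : nominal;
  chan_eq : T -> T -> C;
  acomp : A -> A -> A;
  aunit : A;
  ent : A -> C -> Prop;
  substT : T -> list name -> list T -> T;
  substC : C -> list name -> list T -> C;
  substA : A -> list name -> list T -> A;
  chan_eq_eqv : forall a b M N,
    swap a b (chan_eq M N) = chan_eq (swap a b M) (swap a b N);
  acomp_eqv : forall a b P Q,
    swap a b (acomp P Q) = acomp (swap a b P) (swap a b Q);
  aunit_eqv : forall a b, swap a b aunit = aunit;
  ent_eqv : forall a b P phi, ent P phi -> ent (swap a b P) (swap a b phi);
  substT_ok : subst_ok substT;
  substC_ok : subst_ok substC;
  substA_ok : subst_ok substA;
  chan_sym : forall P M N, ent P (chan_eq M N) -> ent P (chan_eq N M);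
  chan_trans : forall P M N L,
    ent P (chan_eq M N) -> ent P (chan_eq N L) -> ent P (chan_eq M L);
  comp_compat : forall P P' P'',
    (forall phi, ent P phi <-> ent P' phi) ->
    (forall phi, ent (acomp P P'') phi <-> ent (acomp P' P'') phi);
  comp_unit : forall P phi, ent (acomp P aunit) phi <-> ent P phi;
  comp_assoc : forall P P' P'' phi,
    ent (acomp (acomp P P') P'') phi <-> ent (acomp P (acomp P' P'')) phi;
  comp_comm : forall P P' phi, ent (acomp P P') phi <-> ent (acomp P' P) phi
}.

Arguments chan_eq {p} _ _.
Arguments acomp {p} _ _.
Arguments aunit {p}.
Arguments ent {p} _ _.

Section Frames.
Variable P : psi_calculus.

Definition frame := (list name * A P)%type.

Definition ffn (F : frame) (a : name) : Prop := supp (snd F) a /\ ~ In a (fst F).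

Definition fswap (a b : name) (F : frame) : frame :=
  (map (swap_name a b) (fst F), swap a b (snd F)).

Definition alpha_step (F G : frame) : Prop :=
  exists b c, ~ ffn F b /\ ~ ffn F c /\ G = fswap b c F.

Definition alpha : frame -> frame -> Prop := clos_refl_sym_trans frame alpha_step.

Definition frame_ent (F : frame) (phi : C P) : Prop :=
  exists bs Psi, alpha F (bs, Psi) /\ (forall b, In b bs -> fresh b phi) /\ ent Psi phi.

Definition frame_equiv (F G : frame) : Prop :=
  forall phi, frame_ent F phi <-> frame_ent G phi.

Definition frame_comp (F G K : frame) : Prop :=
  exists b1 Psi1 b2 Psi2,
    alpha F (b1, Psi1) /\ alpha G (b2, Psi2) /\
    (forall b, In b b1 -> ~ In b b2 /\ fresh b Psi2) /\
    (forall b, In b b2 -> ~ In b b1 /\ fresh b Psi1) /\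
    alpha K (b1 ++ b2, acomp Psi1 Psi2).
End Frames.

(* Main.v *)
Require Import Defs.
From Stdlib Require Import List Arith Relations Lia Classical.
Import ListNotations.

Ltac sn := unfold swap_name; repeat match goal with |- context[Nat.eqb ?x ?y] => is_var x; is_var y; destruct (Nat.eqb_spec x y); subst; simpl end; try congruence.

Lemma sn_aa a c : swap_name a a c = c.
Proof. sn. Qed.
Lemma sn_inv a b c : swap_name a b (swap_name a b c) = c.
Proof. sn. Qed.
Lemma sn_conj a b c d y : swap_name a b (swap_name c d y) = swap_name (swap_name a b c) (swap_name a b d) (swap_name a b y).
Proof. sn. Qed.

Lemma sn_inj a b x y : swap_name a b x = swap_name a b y -> x = y.
Proof. intro H. rewrite <- (sn_inv a b x), <- (sn_inv a b y), H. reflexivity. Qed.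

Lemma map_sn_inv a b l : map (swap_name a b) (map (swap_name a b) l) = l.
Proof. rewrite map_map. erewrite map_ext; [apply map_id|]. intro; apply sn_inv. Qed.

Lemma le_max x l : In x l -> x <= list_max l.
Proof. induction l; simpl; [tauto|]. intros [->|H]; [lia|]. specialize (IHl H); lia. Qed.

Lemma map_sn_id a b l : ~ In a l -> ~ In b l -> map (swap_name a b) l = l.
Proof.
  induction l; simpl; intros Ha Hb; auto.
  rewrite IHl by tauto. f_equal. unfold swap_name.
  destruct (Nat.eqb_spec a0 a); [tauto|]. destruct (Nat.eqb_spec a0 b); [tauto|]. auto.
Qed.

Definition unitN : nominal.
Proof.
  refine (@Nominal unit (fun _ _ x => x) _ _ _ _); auto.
  intros; exists []; auto.
Defined.

Definition listN : nominal.
Proof.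
  refine (@Nominal (list name) (fun a b l => map (swap_name a b) l) _ _ _ _).
  - intros. erewrite map_ext; [apply map_id|]. intro; apply sn_aa.
  - intros; apply map_sn_inv.
  - intros. rewrite !map_map. apply map_ext. intro; apply sn_conj.
  - intros x. exists x. intros; apply map_sn_id; auto.
Defined.

Definition condN : nominal.
Proof.
  refine (@Nominal (list name * nat) (fun a b p => (map (swap_name a b) (fst p), snd p)) _ _ _ _).
  - intros a [l n]; simpl. f_equal. erewrite map_ext; [apply map_id|]. intro; apply sn_aa.
  - intros a b [l n]; simpl. f_equal; apply map_sn_inv.
  - intros a b c d [l n]; simpl. f_equal. rewrite !map_map. apply map_ext. intro; apply sn_conj.
  - intros [l n]. exists l. intros; simpl. f_equal; apply map_sn_id; auto.
Defined.

Lemma supp_map_iff (l : list name) a :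
  (forall n, exists b, n <= b /\ map (swap_name a b) l <> l) <-> In a l.
Proof.
  split.
  - intros H. destruct (classic (In a l)) as [|Hn]; auto. exfalso.
    destruct (H (S (list_max l))) as [b [Hb Hne]]. apply Hne, map_sn_id; auto.
    intro Hi. apply le_max in Hi. lia.
  - intros Hi n. exists (S (n + a + list_max l)). split; [lia|]. intro He.
    set (b := S (n + a + list_max l)) in *.
    assert (Hin : In (swap_name a b a) (map (swap_name a b) l)) by (apply in_map; auto).
    rewrite He in Hin. unfold b in Hin. unfold swap_name in Hin. rewrite Nat.eqb_refl in Hin. apply le_max in Hin. lia.
Qed.

Lemma supp_listN (l : listN) a : supp l a <-> In a l.
Proof. unfold supp. apply supp_map_iff. Qed.

Lemma supp_condN (p : condN) a : supp p a <-> In a (fst p).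
Proof.
  unfold supp. rewrite <- supp_map_iff. destruct p as [l k]; simpl.
  split; intros H n; destruct (H n) as [b [Hb Hne]]; exists b; split; auto;
  intro E; apply Hne; [rewrite E|injection E]; auto.
Qed.

Lemma supp_unitN (x : unitN) a : ~ supp x a.
Proof. intro H. destruct (H 0) as [b [_ Hb]]. apply Hb. reflexivity. Qed.

Definition entL (Psi : list name) (phi : list name * nat) : Prop :=
  fst phi <> [] /\ incl (fst phi) Psi /\
  (snd phi = 1 <-> exists y, In y Psi /\ ~ In y (fst phi)).

Lemma entL_ext P Q phi : (forall x, In x P <-> In x Q) -> entL P phi -> entL Q phi.
Proof.
  intros E [H1 [H2 H3]]. split; [auto|split].
  - intros x Hx. apply E, H2, Hx.
  - rewrite H3. split; intros [y [Hy Hy']]; exists y; split; auto; apply E; auto.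
Qed.

Lemma entL_eqv a b P phi : entL P phi ->
  entL (map (swap_name a b) P) (map (swap_name a b) (fst phi), snd phi).
Proof.
  intros [H1 [H2 H3]]. simpl. split; [|split].
  - destruct (fst phi); simpl; congruence.
  - intros x Hx. apply in_map_iff in Hx as [z [<- Hz]]. apply in_map; auto.
  - rewrite H3. split.
    + intros [y [Hy Hy']]. exists (swap_name a b y). split; [apply in_map; auto|].
      intro Hi. apply in_map_iff in Hi as [z [Ez Hz]]. apply sn_inj in Ez. subst; auto.
    + intros [y [Hy Hy']]. apply in_map_iff in Hy as [z [<- Hz]]. exists z. split; auto.
      intro Hi; apply Hy', in_map; auto.
Qed.

Definition Psi : psi_calculus.
Proof.
  refine (@PsiCalculus unitN condN listN (fun _ _ => ([], 0)) (@app name) []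
    entL (fun _ _ _ => tt) (fun _ _ _ => ([], 0)) (fun _ _ _ => [])
    _ _ _ _ _ _ _ _ _ _ _ _ _).
  - reflexivity.
  - intros. simpl. apply map_app.
  - reflexivity.
  - intros a b P phi H. apply entL_eqv; auto.
  - split; [reflexivity|split]; [|reflexivity].
    intros x xs Ts b _ _ _ [M [_ HM]]. exfalso; exact (supp_unitN _ _ HM).
  - split; [reflexivity|split]; [|reflexivity].
    intros x xs Ts b _ _ _ [M [_ HM]]. exfalso; exact (supp_unitN _ _ HM).
  - split; [reflexivity|split]; [|reflexivity].
    intros x xs Ts b _ _ _ [M [_ HM]]. exfalso; exact (supp_unitN _ _ HM).
  - intros; assumption.
  - intros; assumption.
  - intros P P' P'' E phi.
    assert (S : forall x, In x P <-> In x P').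
    { assert (D : forall Q Q', (forall phi, entL Q phi <-> entL Q' phi) -> forall x, In x Q -> In x Q').
      { intros Q Q' EQ x Hx.
        destruct (classic (exists y, In y Q /\ ~ In y [x])) as [Hc|Hc].
        - assert (He : entL Q ([x], 1)).
          { split; [simpl; congruence|split]. simpl; intros z [<-|[]]; auto. simpl; tauto. }
          apply EQ in He. destruct He as [_ [Hi _]]. apply Hi; left; auto.
        - assert (He : entL Q ([x], 0)).
          { split; [simpl; congruence|split]. simpl; intros z [<-|[]]; auto. simpl; split; [lia|tauto]. }
          apply EQ in He. destruct He as [_ [Hi _]]. apply Hi; left; auto. }
      intro x; split; apply D; auto. intro; symmetry; apply E. }
    split; apply entL_ext; intro x; rewrite !in_app_iff, (S x); tauto.
  - intros P phi. simpl. rewrite app_nil_r. tauto.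
  - intros. simpl. rewrite app_assoc. tauto.
  - intros P P' phi. split; apply entL_ext; intro x; rewrite !in_app_iff; tauto.
Defined.

Definition fr := frame Psi.

Lemma ffn_iff (F : fr) d : ffn F d <-> In d (snd F : list name) /\ ~ In d (fst F).
Proof. unfold ffn. rewrite (supp_listN (snd F) d). tauto. Qed.

Lemma fswap_inv b c (F : fr) : fswap b c (fswap b c F) = F.
Proof. destruct F as [l p]. unfold fswap; simpl. f_equal; apply map_sn_inv. Qed.

Lemma in_map_sn a b x l : In (swap_name a b x) (map (swap_name a b) l) <-> In x l.
Proof.
  split; [|apply in_map]. intro H. apply in_map_iff in H as [z [E Hz]].
  apply sn_inj in E; subst; auto.
Qed.

Lemma alpha_step_sym (x y : fr) : alpha_step x y -> alpha_step y x.
Proof.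
  intros [b [c [Hb [Hc ->]]]]. exists b, c. rewrite fswap_inv. split; [|split; auto].
  - rewrite ffn_iff. destruct x as [l p]. simpl. intros [H1 H2].
    apply Hc. rewrite ffn_iff; simpl.
    assert (Ebc : swap_name b c c = b) by (unfold swap_name; rewrite Nat.eqb_refl;
       destruct (Nat.eqb_spec c b); auto).
    cbn in H1, H2. split; [apply (in_map_sn b c c); rewrite Ebc; exact H1|]. intro Hc'; apply H2. rewrite <- Ebc at 1. apply in_map; auto.
  - rewrite ffn_iff. destruct x as [l p]. simpl. intros [H1 H2].
    apply Hb. rewrite ffn_iff; simpl.
    assert (Ebc : swap_name b c b = c) by (unfold swap_name; rewrite Nat.eqb_refl; auto).
    cbn in H1, H2. split; [apply (in_map_sn b c b); rewrite Ebc; exact H1|]. intro Hc'; apply H2. rewrite <- Ebc at 1. apply in_map; auto.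
Qed.

Lemma alpha_inv (Inv : fr -> Prop) :
  (forall b c x, ~ ffn x b -> ~ ffn x c -> Inv x -> Inv (fswap b c x)) ->
  forall x y, alpha x y -> (Inv x <-> Inv y).
Proof.
  intros HI x y H. induction H.
  - split.
    + destruct H as [b [c [H1 [H2 ->]]]]. apply HI; auto.
    + apply alpha_step_sym in H. destruct H as [b [c [H1 [H2 ->]]]]. apply HI; auto.
  - tauto.
  - tauto.
  - tauto.
Qed.

Definition InvG (F : fr) := forall y, In y (snd F : list name) -> In y (fst F).
Definition InvF (F : fr) := InvG F /\ (snd F : list name) <> [].
Definition InvE (F : fr) := (snd F : list name) = [].
Definition InvH (F : fr) := In 1 (snd F : list name) /\ ~ In 1 (fst F) /\
  forall y, In y (snd F : list name) -> y = 1.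

Lemma InvG_pres : forall b c x, ~ ffn x b -> ~ ffn x c -> InvG x -> InvG (fswap b c x).
Proof.
  intros b c [l p] _ _ H y Hy. simpl in *. apply in_map_iff in Hy as [z [<- Hz]].
  apply in_map; auto.
Qed.

Lemma InvF_pres : forall b c x, ~ ffn x b -> ~ ffn x c -> InvF x -> InvF (fswap b c x).
Proof.
  intros b c x Hb Hc [H1 H2]. split; [apply InvG_pres; auto|].
  destruct x as [l p]; simpl in *. destruct p; simpl; congruence.
Qed.

Lemma InvE_pres : forall b c x, ~ ffn x b -> ~ ffn x c -> InvE x -> InvE (fswap b c x).
Proof. intros b c [l p] _ _ H. unfold InvE in *; simpl in *. rewrite H; reflexivity. Qed.

Lemma InvH_pres : forall b c x, ~ ffn x b -> ~ ffn x c -> InvH x -> InvH (fswap b c x).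
Proof.
  intros b c [l p] Hb Hc [H1 [H2 H3]]. simpl in *.
  assert (F1 : ffn ((l, p) : fr) 1) by (rewrite ffn_iff; simpl; auto).
  assert (b <> 1) by (intros ->; auto). assert (c <> 1) by (intros ->; auto).
  assert (E : swap_name b c 1 = 1).
  { unfold swap_name. destruct (Nat.eqb_spec 1 b); [congruence|].
    destruct (Nat.eqb_spec 1 c); congruence. }
  unfold InvH; simpl. split; [|split].
  - rewrite <- E. apply in_map; auto.
  - rewrite <- E, in_map_sn. auto.
  - intros y Hy. apply in_map_iff in Hy as [z [<- Hz]]. rewrite (H3 z Hz). auto.
Qed.

Lemma supp_cond (phi : C Psi) a : supp phi a <-> In a (fst phi).
Proof. apply (supp_condN phi a). Qed.

Lemma not_ent_G (K : fr) phi : InvG K -> ~ frame_ent K phi.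
Proof.
  intros HK [bs [Ps [Ha [Hf He]]]].
  apply (alpha_inv _ InvG_pres _ _ Ha) in HK.
  destruct He as [H1 [H2 H3]]. destruct (fst phi) as [|s S] eqn:E; [congruence|].
  assert (Hs : In s (s :: S)) by (left; auto).
  apply H2, HK in Hs. simpl in Hs. apply (Hf s Hs). apply supp_cond. rewrite E; left; auto.
Qed.

Theorem mainTheorem10 :
  exists (P : psi_calculus) (F G H : frame P),
    frame_equiv F G /\
    (exists K1, frame_comp F H K1) /\ (exists K2, frame_comp G H K2) /\
    (forall K1 K2, frame_comp F H K1 -> frame_comp G H K2 -> ~ frame_equiv K1 K2).
Proof.
  exists Psi, ([0], [0] : list name), ([], [] : list name), ([], [1] : list name).
  split; [|split; [|split]].
  - intro phi. split; intro Hf; exfalso; revert Hf; apply not_ent_G;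
      intros y Hy; simpl in *; tauto.
  - exists ([0] ++ [], ([0] ++ [1] : list name)).
    exists [0], ([0] : list name), [], ([1] : list name).
    split; [apply rst_refl|split; [apply rst_refl|split; [|split]]].
    + intros b [<-|[]]. split; auto. unfold fresh. rewrite supp_listN. simpl. lia.
    + intros b [].
    + apply rst_refl.
  - exists ([] ++ [], ([] ++ [1] : list name)).
    exists [], ([] : list name), [], ([1] : list name).
    split; [apply rst_refl|split; [apply rst_refl|split; [|split]]].
    + intros b [].
    + intros b [].
    + apply rst_refl.
  - intros K1 K2 [b1 [P1 [b2 [P2 [A1 [A2 [D1 [D2 A3]]]]]]]]
                 [c1 [Q1 [c2 [Q2 [B1 [B2 [E1 [E2 B3]]]]]]]] Heq.
    assert (HF : InvF (b1, P1)).
    { apply (alpha_inv _ InvF_pres _ _ A1). split; [intros y [<-|[]]; left; auto|simpl; congruence]. }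
    assert (HH : InvH (b2, P2)).
    { apply (alpha_inv _ InvH_pres _ _ A2). unfold InvH; simpl; split; [auto|split; [tauto|]].
      intros y [<-|[]]; auto. }
    assert (HE : InvE (c1, Q1)).
    { apply (alpha_inv _ InvE_pres _ _ B1). reflexivity. }
    assert (HH2 : InvH (c2, Q2)).
    { apply (alpha_inv _ InvH_pres _ _ B2). unfold InvH; simpl; split; [auto|split; [tauto|]].
      intros y [<-|[]]; auto. }
    destruct HF as [HG1 HN1]. destruct HH as [H21 [H22 H23]]. destruct HH2 as [G21 [G22 G23]].
    unfold InvE in HE; simpl in *.
    assert (Ent1 : frame_ent K1 (([1], 1) : C Psi)).
    { exists (b1 ++ b2), (P1 ++ P2 : list name). split; [exact A3|split].
      - intros b Hb. unfold fresh. rewrite supp_cond. simpl.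
        apply in_app_iff in Hb as [Hb|Hb].
        + destruct (D1 b Hb) as [_ Hfr]. unfold fresh in Hfr. rewrite supp_listN in Hfr.
          intros [<-|[]]; auto.
        + intros [<-|[]]; auto.
      - split; [simpl; congruence|split].
        + simpl. intros z [<-|[]]. apply in_app_iff; right; auto.
        + simpl. split; auto. intros _. destruct P1 as [|y P1']; [congruence|].
          exists y. split; [apply in_app_iff; left; left; auto|].
          assert (Hy : In y b1) by (apply HG1; left; auto).
          destruct (D1 y Hy) as [_ Hfr]. unfold fresh in Hfr. rewrite supp_listN in Hfr.
          intros [<-|[]]; auto. }
    apply Heq in Ent1. destruct Ent1 as [bs [Ps [Ha [Hf He]]]].
    assert (HK : InvH (c1 ++ c2, Q1 ++ Q2 : list name)).
    { rewrite HE. simpl. unfold InvH; simpl. split; [auto|split; [|auto]].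
      rewrite in_app_iff. intros [Hc|Hc]; [|auto].
      destruct (E1 1 Hc) as [_ Hfr]. unfold fresh in Hfr. rewrite supp_listN in Hfr. auto. }
    assert (Ha' : alpha ((c1 ++ c2, Q1 ++ Q2 : list name) : fr) (bs, Ps)).
    { eapply rst_trans; [apply rst_sym; exact B3|exact Ha]. }
    apply (alpha_inv _ InvH_pres _ _ Ha') in HK.
    destruct HK as [_ [_ Hall]]. destruct He as [_ [_ Hc]]. simpl in *.
    destruct (proj1 Hc eq_refl) as [y [Hy Hny]]. apply Hny. left. symmetry. apply Hall; auto.
Qed.
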